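(* Let $c>0$ and $\gamma>0$, and define the hybrid ordinary-Cauchy (HOC) function $l_{\gamma,c}:\mathbb{R}\to\mathbb{R}$ by $$l_{\gamma,c}(x)=\begin{cases} x^2/2, & |x|\le c,\\ \frac{\gamma^2+c^2}{2}\ln\!\big(1+(x/\gamma)^2\big)+b, & |x|>c,\end{cases}\qquad b=\frac{c^2}{2}-\frac{\gamma^2+c^2}{2}\ln\!\big(1+(c/\gamma)^2\big).$$ Define the (extended-real-valued) implicit regularizer $\varphi_{\gamma,c}(y)=\sup_{t\in\mathbb{R}}\big[l_{\gamma,c}(t)-\tfrac{(t-y)^2}{2}\big]$. Then for every $x\in\mathbb{R}$, $$l_{\gamma,c}(x)=\min_{y\in\mathbb{R}}\ \frac{(x-y)^2}{2}+\varphi_{\gamma,c}(y),$$ and this minimum is attained uniquely at $$y^\star=\max\Big\{0,\ |x|-\frac{(\gamma^2+c^2)|x|}{\gamma^2+x^2}\Big\}\cdot\operatorname{sign}(x).$$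
   Context: $\operatorname{sign}(x)$ denotes the sign of $x$ (with $\operatorname{sign}(0)=0$). *)

(* Defs.v *)
From HB Require Import structures.
From mathcomp Require Import all_boot all_order all_algebra.
From mathcomp Require Import all_classical all_reals all_analysis.
Set Implicit Arguments. Unset Strict Implicit. Unset Printing Implicit Defensive.
Import Order.TTheory GRing.Theory Num.Theory.
Local Open Scope classical_set_scope.
Local Open Scope ring_scope.

Section HOC.
Variable R : realType.

Definition hoc_b (gamma c : R) : R :=
  c ^+ 2 / 2 - (gamma ^+ 2 + c ^+ 2) / 2 * ln (1 + (c / gamma) ^+ 2).

Definition hoc (gamma c : R) (x : R) : R :=
  if `|x| <= c then x ^+ 2 / 2
  else (gamma ^+ 2 + c ^+ 2) / 2 * ln (1 + (x / gamma) ^+ 2) + hoc_b gamma c.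

Definition hoc_reg (gamma c : R) (y : R) : \bar R :=
  ereal_sup [set (hoc gamma c t - (t - y) ^+ 2 / 2)%:E | t in [set: R]].

Definition hoc_argmin (gamma c : R) (x : R) : R :=
  Num.max 0 (`|x| - (gamma ^+ 2 + c ^+ 2) * `|x| / (gamma ^+ 2 + x ^+ 2)) * Num.sg x.

End HOC.

(* Main.v *)
Require Import Defs.
From HB Require Import structures.
From mathcomp Require Import all_boot all_order all_algebra.
From mathcomp Require Import all_classical all_reals all_analysis.
From mathcomp Require Import ring lra.
Local Open Scope classical_set_scope.
Import Order.TTheory GRing.Theory Num.Theory.
Local Open Scope ring_scope.

Section Alg.
Variable R : realType.

Lemma lnsub_le (a b : R) : 0 < a -> 0 < b -> ln a - ln b <= a / b - 1.
Proof.
move=> a0 b0; rewrite -ln_div ?posrE //.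
have E : 1 + (a / b - 1) = a / b by ring.
have := @le_ln1Dx R (a / b - 1); rewrite E; apply.
have : 0 < a / b by apply: divr_gt0.
lra.
Qed.

Lemma lnsub_ge (a b : R) : 0 < a -> 0 < b -> 1 - b / a <= ln a - ln b.
Proof.
move=> a0 b0; have := @lnsub_le b a b0 a0; lra.
Qed.

Arguments lnsub_le [a b].
Arguments lnsub_ge [a b].
Variables (g c : R).

Local Notation K := (g ^+ 2 + c ^+ 2).
Definition FF (t : R) := K / 2 * ln (1 + (t / g) ^+ 2) + hoc_b g c.
Definition GG (t : R) := t ^+ 2 / 2 - FF t.
Definition DD (x : R) := x - K * x / (g ^+ 2 + x ^+ 2).
Definition MM := 1 / 2 + 3 * K / (2 * g ^+ 2).

Lemma u_pos (t : R) : 0 < 1 + (t / g) ^+ 2.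
Proof. have := sqr_ge0 (t / g); lra. Qed.

Lemma u_ratio (hg : 0 < g) (hc : 0 < c) (t x : R) :
  (1 + (t / g) ^+ 2) / (1 + (x / g) ^+ 2) - 1 = (t ^+ 2 - x ^+ 2) / (g ^+ 2 + x ^+ 2).
Proof.
have g0 : g != 0 by rewrite gt_eqF.
have A0 : g ^+ 2 + x ^+ 2 != 0.
  rewrite gt_eqF //; have := sqr_ge0 x; have : 0 < g ^+ 2 by rewrite exprn_gt0. lra.
have := u_pos x; rewrite lt0r => /andP [V0 _].
field. by rewrite A0 g0.
Qed.

Lemma A_pos (hg : 0 < g) (hc : 0 < c) (x : R) : 0 < g ^+ 2 + x ^+ 2.
Proof. have := sqr_ge0 x; have : 0 < g ^+ 2 by rewrite exprn_gt0. lra. Qed.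

Lemma K_pos (hg : 0 < g) (hc : 0 < c) : 0 < K.
Proof. have := (A_pos hg hc) c; lra. Qed.

Lemma L1 (hg : 0 < g) (hc : 0 < c) (t x : R) :
  (t - x) ^+ 2 / 2 * ((x ^+ 2 - c ^+ 2) / (g ^+ 2 + x ^+ 2))
  <= GG t - GG x - DD x * (t - x).
Proof.
have H := lnsub_le (u_pos t) (u_pos x); rewrite (u_ratio hg hc) in H.
have K2 : 0 <= K / 2 by have := (K_pos hg hc); lra.
have H' := ler_wpM2l K2 H.
have A0 : g ^+ 2 + x ^+ 2 != 0 by rewrite gt_eqF // (A_pos hg hc).
have E : (t ^+ 2 - x ^+ 2) / 2 - K / 2 * ((t ^+ 2 - x ^+ 2) / (g ^+ 2 + x ^+ 2))
   - DD x * (t - x) = (t - x) ^+ 2 / 2 * ((x ^+ 2 - c ^+ 2) / (g ^+ 2 + x ^+ 2)).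
  rewrite /DD; field; exact: A0.
rewrite -E /GG /FF; lra.
Qed.

Lemma L2 (hg : 0 < g) (hc : 0 < c) (t x : R) :
  GG t - GG x - DD x * (t - x) <= MM * (t - x) ^+ 2.
Proof.
have H := lnsub_ge (u_pos t) (u_pos x).
have E1 : 1 - (1 + (x / g) ^+ 2) / (1 + (t / g) ^+ 2) = (t ^+ 2 - x ^+ 2) / (g ^+ 2 + t ^+ 2).
  have B0 : g ^+ 2 + t ^+ 2 != 0 by rewrite gt_eqF // (A_pos hg hc).
  have -> : 1 - (1 + (x / g) ^+ 2) / (1 + (t / g) ^+ 2) =
     - ((1 + (x / g) ^+ 2) / (1 + (t / g) ^+ 2) - 1) by ring.
  rewrite (u_ratio hg hc); field; exact: B0.
rewrite E1 in H.
have K2 : 0 <= K / 2 by have := (K_pos hg hc); lra.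
have H' := ler_wpM2l K2 H.
have A0 : g ^+ 2 + x ^+ 2 != 0 by rewrite gt_eqF // (A_pos hg hc).
have B0 : g ^+ 2 + t ^+ 2 != 0 by rewrite gt_eqF // (A_pos hg hc).
have g0 : g != 0 by rewrite gt_eqF.
have E : (t ^+ 2 - x ^+ 2) / 2 - K / 2 * ((t ^+ 2 - x ^+ 2) / (g ^+ 2 + t ^+ 2))
   - DD x * (t - x) = (t - x) ^+ 2 / 2 + K * (t - x) ^+ 2 / 2 *
     ((2 * x * t + x ^+ 2 - g ^+ 2) / ((g ^+ 2 + x ^+ 2) * (g ^+ 2 + t ^+ 2))).
  rewrite /DD; field; by rewrite A0 B0.
have Q : (2 * x * t + x ^+ 2 - g ^+ 2) / ((g ^+ 2 + x ^+ 2) * (g ^+ 2 + t ^+ 2))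
   <= 3 / g ^+ 2.
  rewrite -subr_ge0.
  have -> : 3 / g ^+ 2 - (2 * x * t + x ^+ 2 - g ^+ 2) / ((g ^+ 2 + x ^+ 2) * (g ^+ 2 + t ^+ 2))
     = (3 * ((g ^+ 2 + x ^+ 2) * (g ^+ 2 + t ^+ 2)) - g ^+ 2 * (2 * x * t + x ^+ 2 - g ^+ 2))
       / (g ^+ 2 * ((g ^+ 2 + x ^+ 2) * (g ^+ 2 + t ^+ 2))).
    field; by rewrite A0 B0 g0.
  apply: divr_ge0; last first.
    by apply: mulr_ge0; [exact: sqr_ge0 | apply: mulr_ge0; apply: ltW; exact: (A_pos hg hc)].
  have := sqr_ge0 (g * (x - t)); have := sqr_ge0 (x * t); have := sqr_ge0 (g * t);
  have := sqr_ge0 (g ^+ 2); nra.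
have KT : 0 <= K * (t - x) ^+ 2 / 2.
  apply: divr_ge0 => //; apply: mulr_ge0; [apply: ltW; exact: (K_pos hg hc)|exact: sqr_ge0].
have Q' := ler_wpM2l KT Q.
have : (t - x) ^+ 2 / 2 + K * (t - x) ^+ 2 / 2 *
     ((2 * x * t + x ^+ 2 - g ^+ 2) / ((g ^+ 2 + x ^+ 2) * (g ^+ 2 + t ^+ 2)))
   <= MM * (t - x) ^+ 2.
  have -> : MM * (t - x) ^+ 2 = (t - x) ^+ 2 / 2 + K * (t - x) ^+ 2 / 2 * (3 / g ^+ 2).
    rewrite /MM; field; exact: g0.
  lra.
rewrite -E /GG /FF; lra.
Qed.

Lemma GG_c (x0 : R) : x0 ^+ 2 = c ^+ 2 -> GG x0 = 0.
Proof.
move=> h; rewrite /GG /FF /hoc_b expr_div_n h -expr_div_n; ring.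
Qed.

Lemma DD_c (hg : 0 < g) (hc : 0 < c) (x0 : R) : x0 ^+ 2 = c ^+ 2 -> DD x0 = 0.
Proof.
move=> h; rewrite /DD h.
have A0 : g ^+ 2 + c ^+ 2 != 0 by rewrite gt_eqF // (A_pos hg hc).
field; exact: A0.
Qed.

Lemma GG_ge0 (hg : 0 < g) (hc : 0 < c) (t : R) : 0 <= GG t.
Proof.
have := (L1 hg hc) t c; rewrite (GG_c c) // ((DD_c hg hc) c) // subrr mul0r mulr0; lra.
Qed.

Lemma MM_pos (hg : 0 < g) (hc : 0 < c) : 0 < MM.
Proof.
rewrite /MM; have := (K_pos hg hc); have : 0 < g ^+ 2 by rewrite exprn_gt0.
move=> h1 h2; have : 0 < 3 * K / (2 * g ^+ 2).
  apply: divr_gt0; [lra| ]; lra.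
lra.
Qed.

Lemma hocE (t : R) : hoc g c t = if `|t| <= c then t ^+ 2 / 2 else FF t.
Proof. by []. Qed.

Lemma argminE (hg : 0 < g) (hc : 0 < c) (x : R) : hoc_argmin g c x = if `|x| <= c then 0 else DD x.
Proof.
rewrite /hoc_argmin.
have A0 : g ^+ 2 + x ^+ 2 != 0 by rewrite gt_eqF // (A_pos hg hc).
have nx := real_normK (num_real x).
have E : `|x| - (g ^+ 2 + c ^+ 2) * `|x| / (g ^+ 2 + x ^+ 2)
    = `|x| * ((x ^+ 2 - c ^+ 2) / (g ^+ 2 + x ^+ 2)).
  field; exact: A0.
have n0 := normr_ge0 x.
have [hx|hx] := leP `|x| c.
  rewrite max_l ?mul0r //; rewrite E.
  apply: mulr_ge0_le0 => //; apply: mulr_le0_ge0; last by apply: ltW; rewrite invr_gt0 (A_pos hg hc).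
  nra.
rewrite max_r; last first.
  rewrite E; apply: ltW; apply: mulr_gt0; first (clear E nx A0; lra).
  apply: divr_gt0; [nra| exact: (A_pos hg hc)].
have nsx : `|x| * Num.sg x = x by rewrite mulrC mulr_sg_norm.
rewrite /DD.
have E2 : (`|x| - (g ^+ 2 + c ^+ 2) * `|x| / (g ^+ 2 + x ^+ 2)) * Num.sg x =
  (`|x| * Num.sg x) - (g ^+ 2 + c ^+ 2) * (`|x| * Num.sg x) / (g ^+ 2 + x ^+ 2) by ring.
by rewrite E2 nsx.
Qed.

Lemma keyA (hg : 0 < g) (hc : 0 < c) (x t : R) :
  hoc g c t - (t - hoc_argmin g c x) ^+ 2 / 2 <= hoc g c x - (x - hoc_argmin g c x) ^+ 2 / 2.
Proof.
have nx := real_normK (num_real x).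
have nt := real_normK (num_real t).
have n0 := normr_ge0 x.
rewrite (argminE hg hc) !hocE.
have [hx|hx] := leP `|x| c; have [ht|ht] := leP `|t| c.
- lra.
- have := (GG_ge0 hg hc) t; rewrite /GG; lra.
- have D : -c <= t <= c by rewrite -ler_norml.
  case/andP: D => D1 D2.
  have h1 := (L1 hg hc) c x; have h2 := (L1 hg hc) (-c) x.
  rewrite (GG_c c) // in h1; rewrite (GG_c (-c)) ?sqrrN // in h2.
  have p1 : 0 <= (c - x) ^+ 2 / 2 * ((x ^+ 2 - c ^+ 2) / (g ^+ 2 + x ^+ 2)).
    apply: mulr_ge0; first by apply: divr_ge0; [exact: sqr_ge0|].
    apply: divr_ge0; [nra| apply: ltW; exact: (A_pos hg hc)].
  have p2 : 0 <= (-c - x) ^+ 2 / 2 * ((x ^+ 2 - c ^+ 2) / (g ^+ 2 + x ^+ 2)).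
    apply: mulr_ge0; first by apply: divr_ge0; [exact: sqr_ge0|].
    apply: divr_ge0; [nra| apply: ltW; exact: (A_pos hg hc)].
  have [d0|d0] := leP 0 (DD x).
    have : 0 <= DD x * (c - t) by apply: mulr_ge0; lra.
    rewrite /GG in h1 h2 *; lra.
  have : 0 <= (- DD x) * (t + c) by apply: mulr_ge0; lra.
  rewrite /GG in h1 h2 *; lra.
- have h := (L1 hg hc) t x.
  have p : 0 <= (t - x) ^+ 2 / 2 * ((x ^+ 2 - c ^+ 2) / (g ^+ 2 + x ^+ 2)).
    apply: mulr_ge0; first by apply: divr_ge0; [exact: sqr_ge0|].
    apply: divr_ge0; [nra| apply: ltW; exact: (A_pos hg hc)].
  rewrite /GG in h; lra.
Qed.

Lemma keyB (hg : 0 < g) (hc : 0 < c) (x t : R) :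
  t ^+ 2 / 2 - hoc g c t <= x ^+ 2 / 2 - hoc g c x + hoc_argmin g c x * (t - x)
     + MM * (t - x) ^+ 2.
Proof.
have nx := real_normK (num_real x).
have nt := real_normK (num_real t).
have n0 := normr_ge0 x.
have M0 := (MM_pos hg hc).
have sq := sqr_ge0 (t - x).
have Msq : 0 <= MM * (t - x) ^+ 2 by apply: mulr_ge0 => //; exact: ltW.
rewrite (argminE hg hc) !hocE.
have [hx|hx] := leP `|x| c; have [ht|ht] := leP `|t| c.
- lra.
- have [x0 [hx0 hsq]] : exists x0, x0 ^+ 2 = c ^+ 2 /\ (t - x0) ^+ 2 <= (t - x) ^+ 2.
    have D : -c <= x <= c by rewrite -ler_norml.
    case/andP: D => D1 D2.
    move: ht; rewrite ltr_normr => /orP [ht|ht].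
      exists c; split => //; nra.
    exists (-c); split; [by rewrite sqrrN|nra].
  have h := (L2 hg hc) t x0; rewrite (GG_c x0) // ((DD_c hg hc) x0) // mul0r !subr0 in h.
  have := ler_wpM2l (ltW M0) hsq.
  rewrite /GG in h; lra.
- have := (GG_ge0 hg hc) t; have := (L2 hg hc) t x; rewrite /GG; lra.
- have := (L2 hg hc) t x; rewrite /GG; lra.
Qed.

End Alg.

Theorem mainTheorem2 (R : realType) (gamma c : R) (hc : 0 < c) (hg : 0 < gamma) (x : R) :
  ((((x - hoc_argmin gamma c x) ^+ 2 / 2)%:E + hoc_reg gamma c (hoc_argmin gamma c x))
     = (hoc gamma c x)%:E)%E /\
  (forall y : R, y <> hoc_argmin gamma c x ->
     ((hoc gamma c x)%:E < ((x - y) ^+ 2 / 2)%:E + hoc_reg gamma c y)%E).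
Proof.
set ys := hoc_argmin gamma c x.
have KA := @keyA R gamma c hg hc x.
have KB := @keyB R gamma c hg hc x.
split.
  have -> : hoc_reg gamma c ys = (hoc gamma c x - (x - ys) ^+ 2 / 2)%:E.
    apply/eqP; rewrite eq_le; apply/andP; split.
      apply: ge_ereal_sup => _ [t _ <-]; rewrite lee_fin; exact: KA.
    by apply: ereal_sup_ubound; exists x.
  rewrite -EFinD; congr EFin; ring.
move=> y hy.
have M0 := @MM_pos R gamma c hg hc.
have M0' : @MM R gamma c != 0 by rewrite gt_eqF.
set d := (y - ys) / (2 * @MM R gamma c).
have Hreg : ((hoc gamma c (x + d) - (x + d - y) ^+ 2 / 2)%:E <= hoc_reg gamma c y)%E.
  by apply: ereal_sup_ubound; exists (x + d).
have E : (y - ys) * d - @MM R gamma c * d ^+ 2 = (y - ys) ^+ 2 / (4 * @MM R gamma c).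
  rewrite /d; field; exact: M0'.
have P : 0 < (y - ys) ^+ 2 / (4 * @MM R gamma c).
  apply: divr_gt0; last lra.
  rewrite lt0r sqr_ge0 andbT sqrf_eq0 subr_eq0; apply/eqP; exact: hy.
have B := KB (x + d).
have Ht : hoc gamma c x < (x - y) ^+ 2 / 2 + (hoc gamma c (x + d) - (x + d - y) ^+ 2 / 2).
  have Ed : x + d - x = d by ring.
  rewrite Ed in B.
  have Q : 0 < (y - ys) * d - @MM R gamma c * d ^+ 2 by rewrite E.
  rewrite -/ys in B; clearbody d ys; clear E P Hreg KA KB; lra.
apply: (lt_le_trans _ (leeD2l _ Hreg)).
by rewrite -EFinD lte_fin.
Qed.
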